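(* Let $\sigma$ be a two-qubit state that is diagonal in the Bell basis $\{|\Phi^+\rangle,|\Phi^-\rangle,|\Psi^+\rangle,|\Psi^-\rangle\}$, with systems $\hat A_i$ (first qubit) and $\hat B_i$ (second qubit). Suppose there are qubit observables $A_0,A_1,B_0,B_1$ of the form $\vec v\cdot\vec\sigma$ with unit vectors $\vec v\in\mathbb{R}^3$ such that the CHSH winning probability $\omega=\frac12+\frac18\mathrm{Tr}\big[\sigma(A_0\otimes B_0+A_0\otimes B_1+A_1\otimes B_0-A_1\otimes B_1)\big]$ lies in $\left[\frac34,\frac{2+\sqrt2}{4}\right]$. Then $$H(\hat A_i|\hat B_i)_\sigma\le 2h\left(\frac12-\frac{2\omega-1}{\sqrt2}\right)-1.$$
   Context: $H(\hat A_i|\hat B_i)_\sigma=H(\sigma_{\hat A_i\hat B_i})-H(\sigma_{\hat B_i})$ is the conditional von Neumann entropy; $h(p)=-p\log p-(1-p)\log(1-p)$ is the binary entropy, logarithms base 2. $|\Phi^\pm\rangle=(|00\rangle\pm|11\rangle)/\sqrt2$, $|\Psi^\pm\rangle=(|01\rangle\pm|10\rangle)/\sqrt2$; $\vec\sigma=(\sigma_x,\sigma_y,\sigma_z)$ are the Pauli matrices. The CHSH value $\beta$ and winning probability are related by $\omega=\frac12+\frac\beta8$. *)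

(* Defs.v *)
From HB Require Import structures.
From mathcomp Require Import all_boot all_order all_algebra.
From mathcomp Require Import complex mxtens.
From mathcomp Require Import Rstruct.
From Stdlib Require Import Rdefinitions Rpower.
Set Implicit Arguments. Unset Strict Implicit. Unset Printing Implicit Defensive.
Import Order.TTheory GRing.Theory Num.Theory.
Local Open Scope complex_scope.
Local Open Scope ring_scope.

Notation C := (Rdefinitions.R[i]).
Notation Real := Rdefinitions.R.

(* logarithm base 2 (Stdlib ln; ln x = 0 for x <= 0, so 0 log 0 = 0) *)
Definition log2 (x : Real) : Real := Rpower.ln x / Rpower.ln 2.

Definition eta (x : Real) : Real := - (x * log2 x).

Definition hbin (p : Real) : Real := eta p + eta (1 - p).

(* von Neumann entropy H(rho) = - sum_i lambda_i log lambda_i, where lambda_i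
   are the eigenvalues of rho (diagonal of its spectral decomposition);
   for a density matrix they are real, we take the real part. *)
Definition vN_entropy n (rho : 'M[C]_n) : Real :=
  \sum_(i < n) eta (complex.Re (spectral_diag rho 0 i)).

(* two-qubit matrices live in 'M_(2*2), indexed by mxtens_index (a, b) *)
Definition ptraceA (rho : 'M[C]_(2 * 2)) : 'M[C]_2 :=
  \matrix_(j, l) \sum_(i < 2) rho (mxtens_index (i, j)) (mxtens_index (i, l)).

Definition cond_entropy (rho : 'M[C]_(2 * 2)) : Real :=
  vN_entropy rho - vN_entropy (ptraceA rho).

Definition pauli_x : 'M[C]_2 := \matrix_(i, j) (if i == j then 0 else 1).
Definition pauli_y : 'M[C]_2 :=
  \matrix_(i, j) (if i == j then 0 else if i == 0 then - 'i else 'i).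
Definition pauli_z : 'M[C]_2 :=
  \matrix_(i, j) (if i == j then (if i == 0 then 1 else -1) else 0).

Definition obs (v : 'rV[Real]_3) : 'M[C]_2 :=
  (v 0 0)%:C *: pauli_x + (v 0 1)%:C *: pauli_y + (v 0 2)%:C *: pauli_z.

Definition unit_vec (v : 'rV[Real]_3) : Prop := \sum_(k < 3) v 0 k ^+ 2 = 1.

Definition ket (b : 'I_2) : 'cV[C]_2 := delta_mx b 0.
Definition ket2 (a b : 'I_2) : 'cV[C]_(2 * 2) := ket a *t ket b.

Definition invsqrt2 : C := (Num.sqrt (2 : Real))^-1%:C.

(* Bell basis: 0 = Phi+, 1 = Phi-, 2 = Psi+, 3 = Psi- *)
Definition bell (k : 'I_4) : 'cV[C]_(2 * 2) :=
  match val k with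
  | 0 => invsqrt2 *: (ket2 0 0 + ket2 1 1)
  | 1 => invsqrt2 *: (ket2 0 0 - ket2 1 1)
  | 2 => invsqrt2 *: (ket2 0 1 + ket2 1 0)
  | _ => invsqrt2 *: (ket2 0 1 - ket2 1 0)
  end.

Definition adj m n (M : 'M[C]_(m, n)) : 'M[C]_(n, m) := map_mx Num.conj (M^T).

Definition bell_diag (p : 'I_4 -> Real) : 'M[C]_(2 * 2) :=
  \sum_(k < 4) (p k)%:C *: (bell k *m adj (bell k)).

Definition chsh_omega (sigma : 'M[C]_(2 * 2)) (A0 A1 B0 B1 : 'M[C]_2) : Real :=
  1 / 2 + complex.Re (\tr (sigma *m (A0 *t B0 + A0 *t B1 + A1 *t B0 - A1 *t B1))) / 8.

(* Main.v *)
Require Import Defs.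

Module StdPart.
From Stdlib Require Import Reals Lra.
From Coquelicot Require Import Coquelicot.
Local Open Scope R_scope.

Definition phi (t : R) : R := - ((1-t)/2 * ln ((1-t)/2)) - ((1+t)/2 * ln ((1+t)/2)).
Definition ath (t : R) : R := (ln (1+t) - ln (1-t))/2.

Lemma ln_div2 x : 0 < x -> ln (x/2) = ln x - ln 2.
Proof. intros Hx. unfold Rdiv. rewrite ln_mult by lra. rewrite ln_Rinv by lra. ring. Qed.

Lemma phi_deriv t : -1 < t < 1 -> derivable_pt_lim phi t (- ath t).
Proof.
intros Ht. apply is_derive_Reals. unfold phi, ath.
auto_derive. split; [lra|split;[lra|easy]].
replace ((1 + - t) * / 2) with ((1-t)/2) by (unfold Rdiv; ring).
replace ((1 + t) * / 2) with ((1+t)/2) by (unfold Rdiv; ring).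
rewrite !ln_div2 by lra. field; lra.
Qed.

Lemma ath_deriv t : -1 < t < 1 -> derivable_pt_lim ath t (/ (1 - t*t)).
Proof.
intros Ht. apply is_derive_Reals. unfold ath.
auto_derive. split; [lra|split;[lra|easy]].
field. repeat split; nra. 
Qed.

Lemma inv_mono x y : 0 <= x -> x <= y -> y < 1 -> / (1 - x*x) <= / (1 - y*y).
Proof. intros. apply Rinv_le_contravar; nra. Qed.

Lemma ath0 : ath 0 = 0.
Proof. unfold ath. replace (1+0) with 1 by ring. replace (1-0) with 1 by ring. lra. Qed.

Lemma ath_pos c : 0 < c < 1 -> 0 < ath c.
Proof. intros Hc. unfold ath. assert (ln (1-c) < ln (1+c)) by (apply ln_increasing; lra). lra. Qed.

Section R.
Variable c : R.
Hypothesis Hc : 0 < c < 1.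
Let A := ath c.
Let r t := ath t - A / c * t.
Let r' t := / (1 - t*t) - A / c.

Lemma r_deriv t : -1 < t < 1 -> derivable_pt_lim r t (r' t).
Proof.
intros Ht. unfold r, r', ath. apply is_derive_Reals.
auto_derive. repeat split; lra. field. repeat split; nra.
Qed.

Lemma r0 : r 0 = 0. Proof. unfold r. rewrite ath0. ring. Qed.
Lemma rc : r c = 0. Proof. unfold r, A. field. lra. Qed.

Lemma mvt_r a b : 0 <= a -> a < b -> b < 1 -> exists x, r b - r a = r' x * (b - a) /\ a < x < b.
Proof. intros. apply MVT_cor2; [easy|]. intros x Hx. apply r_deriv. lra. Qed.

Lemma r_le0 t : 0 <= t <= c -> r t <= 0.
Proof.
intros Ht. destruct (Req_dec t 0) as [->|H0]. rewrite r0; lra.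
destruct (Req_dec t c) as [->|H1]. rewrite rc; lra.
destruct (mvt_r 0 t) as [x1 [E1 H1x]]; try lra.
destruct (mvt_r t c) as [x2 [E2 H2x]]; try lra.
rewrite r0 in E1. rewrite rc in E2.
assert (r' x1 <= r' x2) by (unfold r'; pose proof (inv_mono x1 x2); lra).
revert E1 E2 H. generalize (r t) (r' x1) (r' x2). intros u a b E1 E2 H.
destruct (Rle_or_lt u 0); [lra|]. assert (0 < a) by nra. nra.
Qed.

Lemma r_ge0 t : c <= t < 1 -> 0 <= r t.
Proof.
intros Ht. destruct (Req_dec t c) as [->|H1]. rewrite rc; lra.
destruct (mvt_r 0 c) as [x1 [E1 H1x]]; try lra.
destruct (mvt_r c t) as [x2 [E2 H2x]]; try lra.
rewrite r0, rc in E1. rewrite rc in E2.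
assert (r' x1 <= r' x2) by (unfold r'; pose proof (inv_mono x1 x2); lra).
revert E1 E2 H. generalize (r t) (r' x1) (r' x2). intros u a b E1 E2 H.
assert (a = 0) by nra. nra.
Qed.

Let K := A / (2 * c).
Let E t := phi t + K * (t * t).

Lemma E_deriv t : -1 < t < 1 -> derivable_pt_lim E t (- r t).
Proof.
intros Ht. unfold E, r. apply is_derive_Reals.
unfold phi, ath, K. auto_derive. repeat split; lra.
replace ((1 + - t) * / 2) with ((1-t)/2) by (unfold Rdiv; ring).
replace ((1 + t) * / 2) with ((1+t)/2) by (unfold Rdiv; ring).
rewrite !ln_div2 by lra. field; lra.
Qed.

Lemma mvt_E a b : 0 <= a -> a < b -> b < 1 -> exists x, E b - E a = - r x * (b - a) /\ a < x < b.
Proof. intros. apply (MVT_cor2 E (fun x => - r x)); [easy|]. intros x Hx. apply E_deriv. lra. Qed.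

Lemma E_le t : 0 <= t < 1 -> E t <= E c.
Proof.
intros Ht. destruct (Rtotal_order t c) as [Hlt|[Heq|Hgt]].
- destruct (mvt_E t c) as [x [E1 Hx]]; try lra.
  pose proof (r_le0 x). nra.
- subst; lra.
- destruct (mvt_E c t) as [x [E1 Hx]]; try lra.
  pose proof (r_ge0 x). nra.
Qed.

End R.

Lemma xlnx_le0 x : 0 <= x <= 1 -> x * ln x <= 0.
Proof.
intros Hx. destruct (Req_dec x 0) as [->|H0]. lra.
assert (ln x <= ln 1) by (apply ln_le; lra). rewrite ln_1 in H. nra.
Qed.

Lemma phi_nonneg t : -1 <= t <= 1 -> 0 <= phi t.
Proof.
intros Ht. unfold phi.
pose proof (xlnx_le0 ((1-t)/2)). pose proof (xlnx_le0 ((1+t)/2)). 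
assert (0 <= (1-t)/2 <= 1) by lra. assert (0 <= (1+t)/2 <= 1) by lra. 
lra.
Qed.

Lemma phi_1 : phi 1 = 0.
Proof. unfold phi. replace ((1-1)/2) with 0 by field. replace ((1+1)/2) with 1 by field. rewrite ln_1. ring. Qed.

Lemma phi_even t : phi (- t) = phi t.
Proof. unfold phi. replace (1 - - t) with (1 + t) by ring. replace (1 + - t) with (1 - t) by ring. ring. Qed.

Lemma phi_abs t : phi (Rabs t) = phi t.
Proof. unfold Rabs. destruct (Rcase_abs t). apply phi_even. easy. Qed.

Section R2.
Variable c : R.
Hypothesis Hc : 0 < c < 1.
Let K := ath c / (2 * c).

Lemma K_pos : 0 < K.
Proof. unfold K. pose proof (ath_pos c Hc). apply Rdiv_lt_0_compat; lra. Qed.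

Lemma E_le_all t : 0 <= t <= 1 -> phi t + K * (t*t) <= phi c + K * (c*c).
Proof.
intros Ht. destruct (Req_dec t 1) as [->|H1]; [|apply (E_le c Hc); lra].
pose proof K_pos as HK.
destruct (Rle_or_lt (phi 1 + K * (1*1)) (phi c + K * (c*c))) as [H|H]; [easy|exfalso].
rewrite phi_1 in H.
set (d := K * (1*1) - (phi c + K * (c*c))).
assert (Hd : 0 < d) by (unfold d; lra).
set (del := Rmin ((1-c)/2) (d/(4*K))).
assert (Hdel1 : 0 < del). { unfold del. apply Rmin_pos; [lra|]. apply Rdiv_lt_0_compat; lra. }
assert (Hdel2 : del <= (1-c)/2) by apply Rmin_l.
assert (Hdel3 : del <= d/(4*K)) by apply Rmin_r.
assert (Hdel4 : 4 * K * del <= d).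
{ apply (Rmult_le_compat_l (4*K)) in Hdel3; [|lra]. replace (4 * K * (d / (4 * K))) with d in Hdel3 by (field; lra). lra. }
pose proof (E_le c Hc (1 - del)) as HE. simpl in HE.
fold K in HE.
assert (0 <= phi (1 - del)) by (apply phi_nonneg; lra).
assert (HE' : phi (1 - del) + K * ((1 - del) * (1 - del)) <= phi c + K * (c * c)) by (apply HE; lra).
unfold d in *. nra.
Qed.
End R2.

Lemma main_ineq c t1 t3 : 0 < c <= 1 -> -1 <= t1 <= 1 -> -1 <= t3 <= 1 ->
  2*(c*c) <= t1*t1 + t3*t3 -> phi t1 + phi t3 <= 2 * phi c.
Proof.
intros Hc H1 H3 Hs.
destruct (Req_dec c 1) as [->|Hc1].
- assert (t1 * t1 = 1) by nra. assert (t3 * t3 = 1) by nra.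
  assert (phi t1 = 0). { destruct (Req_dec t1 1) as [->|]. apply phi_1. replace t1 with (Ropp 1) by nra. rewrite phi_even. apply phi_1. }
  assert (phi t3 = 0). { destruct (Req_dec t3 1) as [->|]. apply phi_1. replace t3 with (Ropp 1) by nra. rewrite phi_even. apply phi_1. }
  rewrite phi_1. lra.
- assert (Hc' : 0 < c < 1) by lra.
  pose proof (K_pos c Hc').
  pose proof (E_le_all c Hc' (Rabs t1)) as A1. pose proof (E_le_all c Hc' (Rabs t3)) as A3.
  rewrite phi_abs in A1, A3.
  assert (Rabs t1 * Rabs t1 = t1 * t1) by (rewrite <- Rabs_mult; apply Rabs_pos_eq; nra).
  assert (Rabs t3 * Rabs t3 = t3 * t3) by (rewrite <- Rabs_mult; apply Rabs_pos_eq; nra).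
  assert (0 <= Rabs t1 <= 1) by (split; [apply Rabs_pos| apply Rabs_le; lra]).
  assert (0 <= Rabs t3 <= 1) by (split; [apply Rabs_pos| apply Rabs_le; lra]).
  specialize (A1 H4). specialize (A3 H5). 
  revert A1 A3 H. rewrite H0, H2. generalize (ath c / (2 * c)). intros K A1 A3 HK. nra.
Qed.

Lemma eta_std x : Defs.eta x = - (x * ln x) / ln 2.
Proof. change (Defs.eta x) with (Ropp (Rmult x (Rmult (ln x) (Rinv (ln 2))))). unfold Rdiv. ring. Qed.

Lemma ln2_pos : 0 < ln 2.
Proof. rewrite <- ln_1. apply ln_increasing; lra. Qed.

Lemma hbin_std x : hbin x = Defs.eta x + Defs.eta (1 - x).
Proof. reflexivity. Qed.

Lemma hbin_phi t : hbin ((1-t)/2) = phi t / ln 2.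
Proof.
rewrite hbin_std, !eta_std. unfold phi. replace (1 - (1-t)/2) with ((1+t)/2) by field.
pose proof ln2_pos. field. lra.
Qed.

Lemma hbin_sym x : hbin (1 - x) = hbin x.
Proof. rewrite !hbin_std. replace (1 - (1 - x)) with x by ring. ring. Qed.

Lemma gibbs_term x R0 C0 : 0 <= x -> 0 <= R0 -> 0 <= C0 -> (0 < x -> 0 < R0 /\ 0 < C0) ->
  x * ln R0 + x * ln C0 - x * ln x <= R0 * C0 - x.
Proof.
intros Hx HR HC Hp. destruct (Req_dec x 0) as [->|H0]. nra.
destruct (Hp ltac:(lra)) as [HR' HC'].
assert (Hq : 0 < R0 * C0 / x) by (apply Rdiv_lt_0_compat; nra).
pose proof (exp_ineq1_le (ln (R0 * C0 / x))) as He. rewrite exp_ln in He by easy.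
unfold Rdiv in He. rewrite ln_mult in He by (try apply Rinv_0_lt_compat; nra).
rewrite ln_mult in He by lra. rewrite ln_Rinv in He by lra.
assert (x * (1 + (ln R0 + ln C0 + - ln x)) <= x * (R0 * C0 * / x)) by (apply Rmult_le_compat_l; lra).
replace (x * (R0 * C0 * / x)) with (R0 * C0) in H by (field; lra).
lra.
Qed.

Lemma subadd x00 x01 x10 x11 : 0 <= x00 -> 0 <= x01 -> 0 <= x10 -> 0 <= x11 ->
  x00 + x01 + x10 + x11 = 1 ->
  Defs.eta x00 + Defs.eta x01 + Defs.eta x10 + Defs.eta x11 <=
  hbin (x00 + x01) + hbin (x00 + x10).
Proof.
intros H00 H01 H10 H11 Hs.
rewrite !hbin_std, !eta_std.
replace (1 - (x00 + x01)) with (x10 + x11) by lra.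
replace (1 - (x00 + x10)) with (x01 + x11) by lra.
pose proof ln2_pos.
assert (A1 := gibbs_term x00 (x00+x01) (x00+x10) H00 ltac:(lra) ltac:(lra) ltac:(intros; lra)).
assert (A2 := gibbs_term x01 (x00+x01) (x01+x11) H01 ltac:(lra) ltac:(lra) ltac:(intros; lra)).
assert (A3 := gibbs_term x10 (x10+x11) (x00+x10) H10 ltac:(lra) ltac:(lra) ltac:(intros; lra)).
assert (A4 := gibbs_term x11 (x10+x11) (x01+x11) H11 ltac:(lra) ltac:(lra) ltac:(intros; lra)).
assert (E : (x00 + x01) * (x00 + x10) + (x00 + x01) * (x01 + x11) + (x10 + x11) * (x00 + x10) + (x10 + x11) * (x01 + x11) = 1).
{ replace 1 with ((x00 + x01 + x10 + x11) * (x00 + x01 + x10 + x11)) by (rewrite Hs; ring). ring. }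
set (L := - (x00 * ln x00) - x01 * ln x01 - x10 * ln x10 - x11 * ln x11).
set (Rr := - ((x00 + x01) * ln (x00 + x01)) - ((x10 + x11) * ln (x10 + x11))
   - ((x00 + x10) * ln (x00 + x10)) - ((x01 + x11) * ln (x01 + x11))).
assert (S : L <= Rr).
{ assert (Eq : Rr - L = - ((x00 * ln (x00 + x01) + x00 * ln (x00 + x10) - x00 * ln x00)
     + (x01 * ln (x00 + x01) + x01 * ln (x01 + x11) - x01 * ln x01)
     + (x10 * ln (x10 + x11) + x10 * ln (x00 + x10) - x10 * ln x10)
     + (x11 * ln (x10 + x11) + x11 * ln (x01 + x11) - x11 * ln x11))) by (unfold L, Rr; ring).
  lra. }
replace (- (x00 * ln x00) / ln 2 + - (x01 * ln x01) / ln 2 + - (x10 * ln x10) / ln 2 + - (x11 * ln x11) / ln 2) with (L * / ln 2) by (unfold L; field; lra).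
replace (- ((x00 + x01) * ln (x00 + x01)) / ln 2 + - ((x10 + x11) * ln (x10 + x11)) / ln 2 +
 (- ((x00 + x10) * ln (x00 + x10)) / ln 2 + - ((x01 + x11) * ln (x01 + x11)) / ln 2)) with (Rr * / ln 2) by (unfold Rr; field; lra).
apply Rmult_le_compat_r; [left; apply Rinv_0_lt_compat; lra| easy].
Qed.


Lemma cs3 a1 a2 a3 z1 z2 z3 : a1*a1 + a2*a2 + a3*a3 = 1 ->
  (a1*z1 + a2*z2 + a3*z3) * (a1*z1 + a2*z2 + a3*z3) <= z1*z1 + z2*z2 + z3*z3.
Proof.
intros H.
assert (E : (a1*a1 + a2*a2 + a3*a3) * (z1*z1 + z2*z2 + z3*z3) - (a1*z1 + a2*z2 + a3*z3) * (a1*z1 + a2*z2 + a3*z3)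
  = (a1*z2 - a2*z1)*(a1*z2 - a2*z1) + (a1*z3 - a3*z1)*(a1*z3 - a3*z1) + (a2*z3 - a3*z2)*(a2*z3 - a3*z2)) by ring.
rewrite H in E. 
pose proof (Rle_0_sqr (a1*z2 - a2*z1)). pose proof (Rle_0_sqr (a1*z3 - a3*z1)). pose proof (Rle_0_sqr (a2*z3 - a3*z2)).
unfold Rsqr in *. lra.
Qed.

Lemma wsum la lb lc sa sb sc S : 0 <= la -> 0 <= lb -> 0 <= lc -> lc <= la -> lc <= lb ->
  sa <= S -> sb <= S -> sa + sb + sc = 2 * S ->
  la * sa + lb * sb + lc * sc <= (la + lb) * S.
Proof. intros. assert (sc = 2*S - sa - sb) by lra. subst sc. nra. Qed.

Lemma wsum0 la lb lc wa wb wc W : 0 <= la -> 0 <= lb -> 0 <= lc -> lc <= la -> lc <= lb ->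
  0 <= wa -> 0 <= wb -> 0 <= wc -> wa + wb + wc = W ->
  la * wa + lb * wb + lc * wc <= (la + lb) * W.
Proof. intros. nra. Qed.

Section Core.
Variables ux uy uz wx wy wz lx ly lz x y : R.
Hypothesis Hl : 0 <= lx /\ 0 <= ly /\ 0 <= lz.
Let U := ux*ux + uy*uy + uz*uz.
Let W := wx*wx + wy*wy + wz*wz.
Hypothesis HUW : U + W = 4.
Hypothesis Huw : ux*wx + uy*wy + uz*wz = 0.
Hypothesis Hx : x*x <= lx*(ux*ux) + ly*(uy*uy) + lz*(uz*uz).
Hypothesis Hy : y*y <= lx*(wx*wx) + ly*(wy*wy) + lz*(wz*wz).
Hypothesis Hx0 : U = 0 -> x = 0.
Hypothesis Hy0 : W = 0 -> y = 0.

Lemma sx_gen a1 a2 a3 b1 b2 b3 : a1*b1 + a2*b2 + a3*b3 = 0 ->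
  a1*a1*(b1*b1+b2*b2+b3*b3) + b1*b1*(a1*a1+a2*a2+a3*a3) <= (a1*a1+a2*a2+a3*a3)*(b1*b1+b2*b2+b3*b3).
Proof.
intros H.
assert (E : (a1*a1+a2*a2+a3*a3)*(b1*b1+b2*b2+b3*b3) - (a1*a1*(b1*b1+b2*b2+b3*b3) + b1*b1*(a1*a1+a2*a2+a3*a3))
  = (a2*b3 - a3*b2)*(a2*b3 - a3*b2) + (a2*b2 + a3*b3)*(a2*b2 + a3*b3) - (a1*b1)*(a1*b1)) by ring.
replace (a2*b2 + a3*b3) with (-(a1*b1)) in E by lra.
pose proof (Rle_0_sqr (a2*b3 - a3*b2)); unfold Rsqr in *; lra.
Qed.

Variable L : R.
Hypothesis HL : forall sa sb sc S, 0 <= sa <= S -> 0 <= sb <= S -> 0 <= sc <= S -> sa + sb + sc = 2 * S ->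
  lx * sa + ly * sb + lz * sc <= L * S.
Hypothesis HL0 : forall wa wb wc, 0 <= wa -> 0 <= wb -> 0 <= wc -> lx * wa + ly * wb + lz * wc <= L * (wa + wb + wc).

Lemma core : (x + y) * (x + y) <= 4 * L.
Proof.
assert (HU : 0 <= U) by (unfold U; nra). assert (HW : 0 <= W) by (unfold W; nra).
destruct (Req_dec U 0) as [U0|U0].
{ rewrite (Hx0 U0). assert (W = 4) by lra.
  pose proof (HL0 (wx*wx) (wy*wy) (wz*wz) ltac:(nra) ltac:(nra) ltac:(nra)). fold W in H0. nra. }
destruct (Req_dec W 0) as [W0|W0].
{ rewrite (Hy0 W0). assert (U = 4) by lra.
  pose proof (HL0 (ux*ux) (uy*uy) (uz*uz) ltac:(nra) ltac:(nra) ltac:(nra)). fold U in H0. nra. }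
assert (HUp : 0 < U) by lra. assert (HWp : 0 < W) by lra.
assert (E1 : (U+W)*(x*x*W + y*y*U) - U*W*((x+y)*(x+y)) = (x*W - y*U)*(x*W - y*U)) by ring.
pose proof (Rle_0_sqr (x*W - y*U)). unfold Rsqr in *.
assert (S1 : ux*ux*W + wx*wx*U <= U*W) by (apply sx_gen; lra).
assert (S2 : uy*uy*W + wy*wy*U <= U*W).
{ pose proof (sx_gen uy ux uz wy wx wz ltac:(lra)). unfold U, W in *. nra. }
assert (S3 : uz*uz*W + wz*wz*U <= U*W).
{ pose proof (sx_gen uz ux uy wz wx wy ltac:(lra)). unfold U, W in *. nra. }
pose proof (HL (ux*ux*W + wx*wx*U) (uy*uy*W + wy*wy*U) (uz*uz*W + wz*wz*U) (U*W)) as H5.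
assert (H6 : lx * (ux * ux * W + wx * wx * U) + ly * (uy * uy * W + wy * wy * U) + lz * (uz * uz * W + wz * wz * U) <= L * (U * W)).
{ apply H5; try split; try nra. unfold U, W; ring. }
assert (H7 : x*x*W + y*y*U <= L * (U*W)).
{ assert (x*x*W <= (lx*(ux*ux) + ly*(uy*uy) + lz*(uz*uz))*W) by (apply Rmult_le_compat_r; lra).
  assert (y*y*U <= (lx*(wx*wx) + ly*(wy*wy) + lz*(wz*wz))*U) by (apply Rmult_le_compat_r; lra).
  nra. }
assert (H8 : U*W*((x+y)*(x+y)) <= U*W*(4*L)).
{ rewrite HUW in E1. nra. }
assert (HUW' : 0 < U*W) by nra.
apply Rmult_le_reg_l with (U*W); lra.
Qed.
End Core.

Lemma chsh_bound tx ty tz a0x a0y a0z a1x a1y a1z b0x b0y b0z b1x b1y b1z :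
  a0x*a0x+a0y*a0y+a0z*a0z = 1 -> a1x*a1x+a1y*a1y+a1z*a1z = 1 ->
  b0x*b0x+b0y*b0y+b0z*b0z = 1 -> b1x*b1x+b1y*b1y+b1z*b1z = 1 ->
  forall beta, beta = (tx*a0x*b0x + ty*a0y*b0y + tz*a0z*b0z) + (tx*a0x*b1x + ty*a0y*b1y + tz*a0z*b1z)
    + (tx*a1x*b0x + ty*a1y*b0y + tz*a1z*b0z) - (tx*a1x*b1x + ty*a1y*b1y + tz*a1z*b1z) ->
  beta*beta <= 4*(tx*tx+tz*tz) \/ beta*beta <= 4*(tx*tx+ty*ty) \/ beta*beta <= 4*(ty*ty+tz*tz).
Proof.
intros Ha0 Ha1 Hb0 Hb1 beta Hbeta.
set (ux := b0x+b1x). set (uy := b0y+b1y). set (uz := b0z+b1z).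
set (wx := b0x-b1x). set (wy := b0y-b1y). set (wz := b0z-b1z).
set (x := a0x*(tx*ux) + a0y*(ty*uy) + a0z*(tz*uz)).
set (y := a1x*(tx*wx) + a1y*(ty*wy) + a1z*(tz*wz)).
assert (Eb : beta = x + y) by (rewrite Hbeta; unfold x, y, ux, uy, uz, wx, wy, wz; ring).
rewrite Eb.
assert (Hl : 0 <= tx*tx /\ 0 <= ty*ty /\ 0 <= tz*tz) by (repeat split; nra).
assert (HUW : (ux*ux+uy*uy+uz*uz) + (wx*wx+wy*wy+wz*wz) = 4) by (unfold ux, uy, uz, wx, wy, wz; nra).
assert (Huw : ux*wx + uy*wy + uz*wz = 0) by (unfold ux, uy, uz, wx, wy, wz; nra).
assert (Hx : x*x <= tx*tx*(ux*ux) + ty*ty*(uy*uy) + tz*tz*(uz*uz)).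
{ pose proof (cs3 a0x a0y a0z (tx*ux) (ty*uy) (tz*uz) Ha0). unfold x. nra. }
assert (Hy : y*y <= tx*tx*(wx*wx) + ty*ty*(wy*wy) + tz*tz*(wz*wz)).
{ pose proof (cs3 a1x a1y a1z (tx*wx) (ty*wy) (tz*wz) Ha1). unfold y. nra. }
assert (Hx0 : ux*ux+uy*uy+uz*uz = 0 -> x = 0).
{ intros H. assert (ux = 0) by nra. assert (uy = 0) by nra. assert (uz = 0) by nra.
  unfold x. rewrite H0, H1, H2. ring. }
assert (Hy0 : wx*wx+wy*wy+wz*wz = 0 -> y = 0).
{ intros H. assert (wx = 0) by nra. assert (wy = 0) by nra. assert (wz = 0) by nra.
  unfold y. rewrite H0, H1, H2. ring. }
destruct Hl as [Hlx [Hly Hlz]].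
destruct (Rle_or_lt (tz*tz) (tx*tx)) as [zx|xz].
- destruct (Rle_or_lt (tz*tz) (ty*ty)) as [zy|yz].
  + right; left. apply (core ux uy uz wx wy wz (tx*tx) (ty*ty) (tz*tz) x y); try easy.
    * intros sa sb sc S H1 H2 H3 H4. apply wsum; lra.
    * intros wa wb wc H1 H2 H3. apply wsum0; lra.
  + left. apply (core ux uy uz wx wy wz (tx*tx) (ty*ty) (tz*tz) x y); try easy.
    * intros sa sb sc S H1 H2 H3 H4. pose proof (wsum (tx*tx) (tz*tz) (ty*ty) sa sc sb S); lra.
    * intros wa wb wc H1 H2 H3. pose proof (wsum0 (tx*tx) (tz*tz) (ty*ty) wa wc wb (wa+wb+wc)); lra.
- destruct (Rle_or_lt (tx*tx) (ty*ty)) as [xy|yx].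
  + right; right. apply (core ux uy uz wx wy wz (tx*tx) (ty*ty) (tz*tz) x y); try easy.
    * intros sa sb sc S H1 H2 H3 H4. pose proof (wsum (ty*ty) (tz*tz) (tx*tx) sb sc sa S); lra.
    * intros wa wb wc H1 H2 H3. pose proof (wsum0 (ty*ty) (tz*tz) (tx*tx) wb wc wa (wa+wb+wc)); lra.
  + left. apply (core ux uy uz wx wy wz (tx*tx) (ty*ty) (tz*tz) x y); try easy.
    * intros sa sb sc S H1 H2 H3 H4. pose proof (wsum (tx*tx) (tz*tz) (ty*ty) sa sc sb S); lra.
    * intros wa wb wc H1 H2 H3. pose proof (wsum0 (tx*tx) (tz*tz) (ty*ty) wa wc wb (wa+wb+wc)); lra.
Qed.

Lemma hbin_plus t : hbin ((1+t)/2) = phi t / ln 2.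
Proof. replace ((1+t)/2) with ((1 - -t)/2) by field. rewrite hbin_phi, phi_even. easy. Qed.

Lemma hbin_minus t : hbin ((1-t)/2) = phi t / ln 2.
Proof. apply hbin_phi. Qed.

Lemma pair_bound e t1 t3 c : 0 < c <= 1 -> -1 <= t1 <= 1 -> -1 <= t3 <= 1 ->
  2*(c*c) <= t1*t1 + t3*t3 -> e <= phi t1 / ln 2 + phi t3 / ln 2 -> e <= 2 * hbin ((1-c)/2).
Proof.
intros Hc H1 H3 Hs He. rewrite hbin_phi. pose proof (main_ineq c t1 t3 Hc H1 H3 Hs).
pose proof ln2_pos.
assert (phi t1 / ln 2 + phi t3 / ln 2 <= 2 * (phi c / ln 2)).
{ replace (phi t1 / ln 2 + phi t3 / ln 2) with ((phi t1 + phi t3) * / ln 2) by (field; lra).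
  replace (2 * (phi c / ln 2)) with ((2 * phi c) * / ln 2) by (field; lra).
  apply Rmult_le_compat_r; [left; apply Rinv_0_lt_compat|]; lra. }
lra.
Qed.

Lemma final_real p0 p1 p2 p3 beta s om :
  0 <= p0 -> 0 <= p1 -> 0 <= p2 -> 0 <= p3 -> p0 + p1 + p2 + p3 = 1 ->
  0 < s -> s * s = 2 ->
  om = 1/2 + beta/8 ->
  3/4 <= om <= (2 + s)/4 ->
  (beta*beta <= 4*((p0-p1+p2-p3)*(p0-p1+p2-p3) + (p0+p1-p2-p3)*(p0+p1-p2-p3)) \/
   beta*beta <= 4*((p0-p1+p2-p3)*(p0-p1+p2-p3) + (-p0+p1+p2-p3)*(-p0+p1+p2-p3)) \/
   beta*beta <= 4*((-p0+p1+p2-p3)*(-p0+p1+p2-p3) + (p0+p1-p2-p3)*(p0+p1-p2-p3))) ->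
  Defs.eta p0 + Defs.eta p1 + Defs.eta p2 + Defs.eta p3 - 1 <=
  2 * hbin (1/2 - (2*om - 1)/s) - 1.
Proof.
intros H0 H1 H2 H3 Hs Hs0 Hss Hom Hr Hb.
set (c := (2*om - 1) * s).
assert (Hinv : / s = s / 2) by (field_simplify_eq; lra).
assert (Ec : 1/2 - (2*om - 1)/s = (1 - c)/2) by (unfold c, Rdiv; rewrite Hinv; field).
rewrite Ec.
assert (Hc : 0 < c <= 1).
{ unfold c. split; [apply Rmult_lt_0_compat; lra|].
  assert ((2 * om - 1) * s <= (s/2) * s) by (apply Rmult_le_compat_r; lra). lra. }
assert (Hcb : 2*(c*c) = beta*beta/4).
{ unfold c. rewrite Hom. replace ((2 * (1 / 2 + beta / 8) - 1) * s) with (beta * s / 4) by field.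
  replace (2 * (beta * s / 4 * (beta * s / 4))) with (beta*beta*(s*s)/8) by field. rewrite Hss. field. }
apply Rplus_le_compat_r.
destruct Hb as [Hb|[Hb|Hb]].
- apply (pair_bound _ (p0-p1+p2-p3) (p0+p1-p2-p3)); try lra.
  pose proof (subadd p0 p1 p2 p3 H0 H1 H2 H3 Hs).
  replace (p0+p1) with ((1 + (p0+p1-p2-p3))/2) in H by lra.
  replace (p0+p2) with ((1 + (p0-p1+p2-p3))/2) in H by lra.
  rewrite !hbin_plus in H. lra.
- apply (pair_bound _ (p0-p1+p2-p3) (-p0+p1+p2-p3)); try lra.
  pose proof (subadd p0 p2 p3 p1 H0 H2 H3 H1 ltac:(lra)).
  replace (p0+p2) with ((1 + (p0-p1+p2-p3))/2) in H by lra.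
  replace (p0+p3) with ((1 - (-p0+p1+p2-p3))/2) in H by lra.
  rewrite hbin_plus, hbin_minus in H. lra.
- apply (pair_bound _ (-p0+p1+p2-p3) (p0+p1-p2-p3)); try lra.
  pose proof (subadd p0 p1 p3 p2 H0 H1 H3 H2 ltac:(lra)).
  replace (p0+p1) with ((1 + (p0+p1-p2-p3))/2) in H by lra.
  replace (p0+p3) with ((1 - (-p0+p1+p2-p3))/2) in H by lra.
  rewrite hbin_plus, hbin_minus in H. lra.
Qed.

Lemma eta_half : Defs.eta (/2) = /2.
Proof. rewrite eta_std, ln_Rinv by lra. pose proof ln2_pos. field; lra. Qed.
End StdPart.

From HB Require Import structures.
From mathcomp Require Import all_boot all_order all_algebra.
From mathcomp Require Import complex mxtens Rstruct.
From mathcomp Require Import ring lra spectral sesquilinear.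
Import Order.TTheory GRing.Theory Num.Theory.
Local Open Scope complex_scope.
Local Open Scope ring_scope.

Notation CC := (Rdefinitions.R[i]).
Notation mi := (@mxtens_index 2 2).
Notation s2 := ((Num.sqrt (2 : Real))^-1).

Lemma ket2E a b c d : ket2 a b (mi (c,d)) 0 = ((c == a) && (d == b))%:R.
Proof.
rewrite /ket2 /tensmx mxE mxtens_indexK /= /ket !mxE /=.
case: (c == a); case: (d == b); rewrite /= ?mulr1 ?mulr0 ?mul0r //.
Qed.

Definition vb (k : 'I_4) (a b : 'I_2) : Real :=
  match val k with
  | 0 => ((a == 0) && (b == 0))%:R + ((a == 1) && (b == 1))%:R
  | 1 => ((a == 0) && (b == 0))%:R - ((a == 1) && (b == 1))%:R
  | 2 => ((a == 0) && (b == 1))%:R + ((a == 1) && (b == 0))%:R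
  | _ => ((a == 0) && (b == 1))%:R - ((a == 1) && (b == 0))%:R
  end.

Lemma I1eq (x y : 'I_1) : (x == y) = true.
Proof. by rewrite (ord1 x) (ord1 y). Qed.

Lemma bellE k a b j : bell k (mi (a,b)) j = (s2 * vb k a b)%:C.
Proof.
rewrite (ord1 j) rmorphM /=.
case: k => [[|[|[|[|k]]]] Hk]; rewrite /bell /vb /= !mxE mxtens_indexK /= !I1eq !andbT -!natrM !mulnb
  ?rmorphD ?rmorphB !rmorph_nat //. all: by rewrite ?rmorphN ?rmorph_nat.
Qed.

Lemma conjR (x : Real) : Num.conj (x%:C) = x%:C.
Proof. by rewrite -[LHS]/(conjc _) conjc_real. Qed.

Lemma s2sq : s2 * s2 = 2^-1 :> Real.
Proof. by rewrite -invfM -expr2 sqr_sqrtr // ler0n. Qed.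

Lemma s2M (x y : Real) : (s2 * x) * (s2 * y) = 2^-1 * (x*y).
Proof. by rewrite mulrACA s2sq. Qed.

Lemma adjE m n (M : 'M[C]_(m,n)) i j : adj M i j = Num.conj (M j i).
Proof. by rewrite !mxE. Qed.

Definition sr (p : 'I_4 -> Real) (a b c d : 'I_2) : Real :=
  2^-1 * \sum_(k < 4) p k * (vb k a b * vb k c d).

Lemma sigmaE p a b c d : bell_diag p (mi (a,b)) (mi (c,d)) = (sr p a b c d)%:C.
Proof.
rewrite /bell_diag summxE /sr rmorphM rmorph_sum mulr_sumr; apply: eq_bigr => k _.
rewrite !mxE big_ord1 adjE !bellE conjR -!rmorphM; congr (_%:C).
rewrite -s2sq; ring.
Qed.

Notation k0 := (@Ordinal 4 0 isT).
Notation k1 := (@Ordinal 4 1 isT).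
Notation k2 := (@Ordinal 4 2 isT).
Notation k3 := (@Ordinal 4 3 isT).
Notation i0 := (@Ordinal 2 0 isT).
Notation i1 := (@Ordinal 2 1 isT).

Lemma sum4 (V : nmodType) (F : 'I_4 -> V) : \sum_(k < 4) F k = F k0 + F k1 + F k2 + F k3.
Proof.
rewrite !big_ord_recl big_ord0 addr0 !addrA.
by congr (_ + _ + _ + _); congr F; apply: val_inj.
Qed.

Lemma sum2 (V : nmodType) (F : 'I_2 -> V) : \sum_(k < 2) F k = F i0 + F i1.
Proof.
rewrite !big_ord_recl big_ord0 addr0.
by congr (_ + _); congr F; apply: val_inj.
Qed.

Lemma sumT (V : nmodType) (F : 'I_(2*2) -> V) :
  \sum_(k < 2*2) F k = \sum_(a < 2) \sum_(b < 2) F (mi (a,b)).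
Proof.
rewrite pair_big /= (reindex (@mxtens_index 2 2)) /=; last first.
  by exists (@mxtens_unindex 2 2) => x _; [apply: mxtens_indexK| apply: mxtens_unindexK].
by apply: eq_bigr => -[a b] _.
Qed.

Lemma ptraceE p : \sum_(k < 4) p k = 1 -> ptraceA (bell_diag p) = ((2^-1 : Real)%:C)%:M.
Proof.
rewrite sum4 => Hs.
apply/matrixP => j l; rewrite !mxE sum2 !sigmaE -rmorphD -rmorphMn; congr (_%:C).
rewrite /sr !sum4.
case: j => [[|[|//]] Hj]; case: l => [[|[|//]] Hl]; rewrite /vb /=.
all: rewrite ?mulr1n ?mulr0n; lra.
Qed.

Local Open Scope sesquilinear_scope.

Definition Bm : 'M[C]_(2*2) := \matrix_(i, k) bell k i 0.
Definition dp (p : 'I_4 -> Real) : 'rV[C]_(2*2) := \row_k (p k)%:C.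

Lemma adjBm : adj Bm = Bm ^t*.
Proof. by []. Qed.

Lemma sigma_decomp p : bell_diag p = Bm *m diag_mx (dp p) *m adj Bm.
Proof.
apply/matrixP => i j; rewrite mul_mx_diag /bell_diag summxE !mxE.
apply: eq_bigr => k _; rewrite !mxE big_ord1 !mxE.
by rewrite mulrA [_ * (p k)%:C]mulrC.
Qed.

Lemma Bm_unitary : adj Bm \is unitarymx.
Proof.
apply/unitarymxP; rewrite adjBm trmxCK; apply/matrixP => k l.
rewrite !mxE sumT !sum2 !mxE !bellE !conjR -!rmorphM -!rmorphD -(@rmorph_nat _ _ (real_complex Real)); congr (_%:C).
rewrite !s2M.
case: k => [[|[|[|[|//]]]] Hk]; case: l => [[|[|[|[|//]]]] Hl]; rewrite /vb /=.
all: rewrite ?mulr1n ?mulr0n; lra.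
Qed.

Lemma char_poly_conj n (P A : 'M[C]_n) : P \in unitmx ->
  char_poly (invmx P *m A *m P) = char_poly A.
Proof.
move=> Pu.
have E : char_poly_mx (invmx P *m A *m P) =
   map_mx polyC (invmx P) *m char_poly_mx A *m map_mx polyC P.
  rewrite /char_poly_mx mulmxBr mulmxBl -!map_mxM.
  by congr (_ - _); rewrite -mulmxA -scalar_mxC mulmxA -map_mxM mulVmx // map_mx1 mul1mx.
rewrite /char_poly E !det_mulmx !det_map_mx mulrC mulrA -rmorphM.
by rewrite -det_mulmx mulmxV // det1 rmorph1 mul1r.
Qed.

Lemma char_diag n (d : 'rV[C]_n) :
  char_poly (diag_mx d) = \prod_(x <- [seq d 0 i | i <- index_enum 'I_n]) ('X - x%:P).
Proof.
rewrite char_poly_trig ?diag_mx_is_trig // big_map.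
by apply: eq_bigr => i _; rewrite mxE eqxx mulr1n.
Qed.

Lemma vN_conj_diag n (A U : 'M[C]_n) (d : 'rV[C]_n) : U \is unitarymx ->
  A = invmx U *m diag_mx d *m U -> vN_entropy A = \sum_(i < n) Defs.eta (complex.Re (d 0 i)).
Proof.
move=> Uu HA.
have N : A \is normalmx by apply/orthomx_spectral_subproof; exists (U, d).
have E := orthomx_spectralP N.
have h1 : char_poly A = char_poly (diag_mx (spectral_diag A)).
  by rewrite {1}E char_poly_conj // spectral_unit.
have h2 : char_poly A = char_poly (diag_mx d).
  by rewrite HA char_poly_conj // unitarymx_unit.
have pe := prod_XsubC_eq (etrans (esym (char_diag _ (spectral_diag A))) (etrans (esym h1) (etrans h2 (char_diag _ d)))).
rewrite /vN_entropy.
rewrite -(big_map (fun i => spectral_diag A 0 i) xpredT (fun x => Defs.eta (complex.Re x))).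
rewrite (perm_big _ pe) big_map //.
Qed.

Lemma vN_sigma p : vN_entropy (bell_diag p) = \sum_(k < 4) Defs.eta (p k).
Proof.
rewrite (@vN_conj_diag _ _ (adj Bm) (dp p) Bm_unitary); last first.
  by rewrite invmx_unitary ?Bm_unitary // adjBm trmxCK sigma_decomp.
by apply: eq_bigr => i _; rewrite mxE.
Qed.

Lemma vN_scalar n (a : C) : vN_entropy (a%:M : 'M[C]_n) = Defs.eta (complex.Re a) *+ n.
Proof.
have U1 : (1%:M : 'M[C]_n) \is unitarymx.
  by apply/unitarymxP; rewrite trmx1 map_mx1 mulmx1.
rewrite (@vN_conj_diag _ _ 1%:M (const_mx a) U1); last first.
  by rewrite invmx1 mul1mx mulmx1; apply/matrixP => i j; rewrite !mxE.
by rewrite (eq_bigr (fun _ => Defs.eta (complex.Re a))) ?sumr_const ?card_ord // => i _; rewrite mxE.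
Qed.

Definition oR (v : 'rV[Real]_3) (i j : 'I_2) : Real :=
  if i == j then (if i == 0 then v 0 2 else - v 0 2) else v 0 0.
Definition oI (v : 'rV[Real]_3) (i j : 'I_2) : Real :=
  if i == j then 0 else (if i == 0 then - v 0 1 else v 0 1).

Lemma obsE v i j : obs v i j = (oR v i j) +i* (oI v i j).
Proof.
rewrite /obs /oR /oI !mxE.
case: i => [[|[|//]] Hi]; case: j => [[|[|//]] Hj] /=.
all: by apply/eqP; rewrite eq_complex /=; apply/andP; split; apply/eqP; ring.
Qed.


Definition Tx (p : 'I_4 -> Real) := p k0 - p k1 + p k2 - p k3.
Definition Ty (p : 'I_4 -> Real) := - p k0 + p k1 + p k2 - p k3.
Definition Tz (p : 'I_4 -> Real) := p k0 + p k1 - p k2 - p k3.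
Definition corr p (u w : 'rV[Real]_3) :=
  Tx p * u 0 0 * w 0 0 + Ty p * u 0 1 * w 0 1 + Tz p * u 0 2 * w 0 2.

Lemma tensE (A B : 'M[C]_2) a b c d : (A *t B) (mi (a,b)) (mi (c,d)) = A a c * B b d.
Proof. exact: tensmxE. Qed.

Lemma tr_corr p u w : complex.Re (\tr (bell_diag p *m (obs u *t obs w))) = corr p u w.
Proof.
rewrite /mxtrace sumT; under eq_bigr do under eq_bigr do rewrite mxE sumT.
rewrite !sum2 !sigmaE !tensE !obsE /sr !sum4 /vb /oR /oI /corr /Tx /Ty /Tz /=.
by field.
Qed.

Lemma ReD (x y : C) : complex.Re (x + y) = complex.Re x + complex.Re y.
Proof. by case: x; case: y. Qed.
Lemma ReB (x y : C) : complex.Re (x - y) = complex.Re x - complex.Re y.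
Proof. by case: x; case: y. Qed.

Lemma sum3 (V : nmodType) (F : 'I_3 -> V) : \sum_(k < 3) F k = F 0 + F 1 + F 2.
Proof.
rewrite !big_ord_recl big_ord0 addr0 !addrA.
by congr (_ + _ + _); congr F; apply: val_inj.
Qed.

Lemma unitE v : unit_vec v -> v 0 0 * v 0 0 + v 0 1 * v 0 1 + v 0 2 * v 0 2 = 1.
Proof. by rewrite /unit_vec sum3 !expr2. Qed.

Lemma eta_half' : Defs.eta (2^-1 : Real) = 2^-1.
Proof. exact: StdPart.eta_half. Qed.

Notation phi := StdPart.phi.

Lemma ln2_pos' : 0 < Rpower.ln 2 :> Real.
Proof. exact/RltP/StdPart.ln2_pos. Qed.

Lemma hbin_phi' (t : Real) : hbin ((1-t)/2) = phi t / Rpower.ln 2.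
Proof. exact: StdPart.hbin_phi. Qed.

Lemma phi_even' (t : Real) : phi (- t) = phi t.
Proof. exact: StdPart.phi_even. Qed.

Lemma hbin_plus' (t : Real) : hbin ((1+t)/2) = phi t / Rpower.ln 2.
Proof. by rewrite -phi_even' -hbin_phi' opprK. Qed.

Lemma main_ineq' (c t1 t3 : Real) : 0 < c -> c <= 1 -> -1 <= t1 -> t1 <= 1 -> -1 <= t3 -> t3 <= 1 ->
  2*(c * c) <= t1 * t1 + t3 * t3 -> phi t1 + phi t3 <= 2 * phi c.
Proof.
move=> /RltP h1 /RleP h2 /RleP h3 /RleP h4 /RleP h5 /RleP h6 /RleP h7.
by apply/RleP; apply: StdPart.main_ineq.
Qed.

Lemma subadd' (x00 x01 x10 x11 : Real) : 0 <= x00 -> 0 <= x01 -> 0 <= x10 -> 0 <= x11 ->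
  x00 + x01 + x10 + x11 = 1 ->
  Defs.eta x00 + Defs.eta x01 + Defs.eta x10 + Defs.eta x11 <=
  hbin (x00 + x01) + hbin (x00 + x10).
Proof.
move=> /RleP h1 /RleP h2 /RleP h3 /RleP h4 h5.
by apply/RleP; apply: StdPart.subadd.
Qed.

Lemma chsh' (tx ty tz a0x a0y a0z a1x a1y a1z b0x b0y b0z b1x b1y b1z : Real) :
  a0x * a0x+a0y * a0y+a0z * a0z = 1 -> a1x * a1x+a1y * a1y+a1z * a1z = 1 ->
  b0x * b0x+b0y * b0y+b0z * b0z = 1 -> b1x * b1x+b1y * b1y+b1z * b1z = 1 ->
  forall beta, beta = (tx * a0x * b0x + ty * a0y * b0y + tz * a0z * b0z) + (tx * a0x * b1x + ty * a0y * b1y + tz * a0z * b1z)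
    + (tx * a1x * b0x + ty * a1y * b0y + tz * a1z * b0z) - (tx * a1x * b1x + ty * a1y * b1y + tz * a1z * b1z) ->
  [|| beta * beta <= 4*(tx * tx+tz * tz), beta * beta <= 4*(tx * tx+ty * ty) | beta * beta <= 4*(ty * ty+tz * tz)].
Proof.
move=> h1 h2 h3 h4 beta hb.
have := StdPart.chsh_bound tx ty tz a0x a0y a0z a1x a1y a1z b0x b0y b0z b1x b1y b1z h1 h2 h3 h4 beta hb.
rewrite !RealsE /=.
by case=> [/RleP ->|[/RleP ->|/RleP ->]]; rewrite ?orbT.
Qed.

Lemma pair_bound (e t1 t3 c : Real) : 0 < c -> c <= 1 -> -1 <= t1 -> t1 <= 1 -> -1 <= t3 -> t3 <= 1 ->
  2*(c * c) <= t1 * t1 + t3 * t3 -> e <= phi t1 / Rpower.ln 2 + phi t3 / Rpower.ln 2 -> e <= 2 * hbin ((1-c)/2).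
Proof.
move=> c0 c1 h1 h2 h3 h4 hs he; rewrite hbin_phi'.
have m := @main_ineq' c t1 t3 c0 c1 h1 h2 h3 h4 hs.
have l := ln2_pos'.
have : (phi t1 + phi t3) * (Rpower.ln 2)^-1 <= (2 * phi c) * (Rpower.ln 2)^-1.
  by apply: ler_wpM2r => //; rewrite invr_ge0 ltW.
move: he; lra.
Qed.

Theorem lemma1 (p : 'I_4 -> Real) (a0 a1 b0 b1 : 'rV[Real]_3) :
  (forall k, 0 <= p k) -> \sum_(k < 4) p k = 1 ->
  unit_vec a0 -> unit_vec a1 -> unit_vec b0 -> unit_vec b1 ->
  let omega := chsh_omega (bell_diag p) (obs a0) (obs a1) (obs b0) (obs b1) in
  3 / 4 <= omega <= (2 + Num.sqrt 2) / 4 ->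
  cond_entropy (bell_diag p) <=
    2 * hbin (1 / 2 - (2 * omega - 1) / Num.sqrt 2) - 1.
Proof.
move=> Hp Hs ua0 ua1 ub0 ub1 omega Hom.
have Hs' := Hs; rewrite sum4 in Hs'.
have HC : cond_entropy (bell_diag p) =
    Defs.eta (p k0) + Defs.eta (p k1) + Defs.eta (p k2) + Defs.eta (p k3) - 1.
  rewrite /cond_entropy vN_sigma ptraceE // vN_scalar sum4 /= eta_half'.
  by congr (_ - _); rewrite mulr2n; field.
set beta := corr p a0 b0 + corr p a0 b1 + corr p a1 b0 - corr p a1 b1.
have Hom' : omega = 1 / 2 + beta / 8.
  rewrite /omega /chsh_omega !mulmxDr mulmxN !mxtraceD raddfN /= ReB !ReD !tr_corr.
  by rewrite !RealsE /=.
rewrite HC.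
have hb := chsh' (Tx p) (Ty p) (Tz p) (a0 0 0) (a0 0 1) (a0 0 2) (a1 0 0) (a1 0 1) (a1 0 2)
  (b0 0 0) (b0 0 1) (b0 0 2) (b1 0 0) (b1 0 1) (b1 0 2)
  (unitE _ ua0) (unitE _ ua1) (unitE _ ub0) (unitE _ ub1) beta erefl.
set s := Num.sqrt 2.
have s0 : 0 < s by rewrite sqrtr_gt0.
have ss : s * s = 2 by rewrite -expr2 sqr_sqrtr ?ler0n.
have sn0 : s != 0 by rewrite gt_eqF.
have sinv : s^-1 = s / 2 by rewrite -ss; field.
set c := (2 * omega - 1) * s.
have Ec : 1 / 2 - (2 * omega - 1) / s = (1 - c) / 2.
  by rewrite /c sinv; field.
rewrite Ec.
case/andP: Hom => Hom1 Hom2.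
have {}Hom2 : omega <= (2 + s) / 4 by exact: Hom2.
have hc0 : 0 < c by rewrite /c mulr_gt0 //; lra.
have hc1 : c <= 1.
  have : (2 * omega - 1) * s <= (s / 2) * s by apply: ler_wpM2r; [exact: ltW | lra].
  rewrite /c; lra.
have hcb : 2 * (c * c) = beta * beta / 4.
  rewrite /c Hom' (_ : 2 * (1 / 2 + beta / 8) - 1 = beta / 4); last by field.
  by rewrite mulrACA ss; field.
have P0 := Hp k0; have P1 := Hp k1; have P2 := Hp k2; have P3 := Hp k3.
have tx1 : -1 <= Tx p by rewrite /Tx; lra.
have tx2 : Tx p <= 1 by rewrite /Tx; lra.
have ty1 : -1 <= Ty p by rewrite /Ty; lra.
have ty2 : Ty p <= 1 by rewrite /Ty; lra.
have tz1 : -1 <= Tz p by rewrite /Tz; lra.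
have tz2 : Tz p <= 1 by rewrite /Tz; lra.
rewrite lerD2r.
case/or3P: hb => hb.
- apply: (@pair_bound _ (Tx p) (Tz p) c) => //; first lra.
  have := @subadd' _ _ _ _ P0 P1 P2 P3 Hs'.
  rewrite (_ : p k0 + p k1 = (1 + Tz p) / 2); last by rewrite /Tz; lra.
  rewrite (_ : p k0 + p k2 = (1 + Tx p) / 2); last by rewrite /Tx; lra.
  by rewrite !hbin_plus'; lra.
- apply: (@pair_bound _ (Tx p) (Ty p) c) => //; first lra.
  have Hs2 : p k0 + p k2 + p k3 + p k1 = 1 by lra.
  have := @subadd' _ _ _ _ P0 P2 P3 P1 Hs2.
  rewrite (_ : p k0 + p k2 = (1 + Tx p) / 2); last by rewrite /Tx; lra.
  rewrite (_ : p k0 + p k3 = (1 - Ty p) / 2); last by rewrite /Ty; lra.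
  rewrite hbin_plus' hbin_phi'; lra.
- apply: (@pair_bound _ (Ty p) (Tz p) c) => //; first lra.
  have Hs2 : p k0 + p k1 + p k3 + p k2 = 1 by lra.
  have := @subadd' _ _ _ _ P0 P1 P3 P2 Hs2.
  rewrite (_ : p k0 + p k1 = (1 + Tz p) / 2); last by rewrite /Tz; lra.
  rewrite (_ : p k0 + p k3 = (1 - Ty p) / 2); last by rewrite /Ty; lra.
  rewrite hbin_plus' hbin_phi'; lra.
Qed.
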